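(* Let $T$ be a training dataset with $m$ features and $n$ records. Let $y_{\min}$ be the class label with the fewest records in $T$, and $n_{y_{\min}}$ the number of records in $T$ with label $y_{\min}$ (assume $n_{y_{\min}}\ge 2$). Then the naive Bayes classification algorithm is $\delta$-training stable on $T$ with $\delta=\left(\frac{n_{y_{\min}}}{n_{y_{\min}}-1}\right)^{m-1}\frac{n}{n-1}$.
   Context: Records are pairs $(\mathbf{x},y)$ with $\mathbf{x}=(x_1,\dots,x_m)\in X^m$ and $y\in Y$ finite; a training dataset is a finite multiset of records. For a dataset $S$ of size $N_S$, let $n^S_y$ be the number of records with label $y$ and $n^S_{x_i,y}$ the number with $i$-th feature equal to $x_i$ and label $y$. The naive Bayes classifier trained on $S$ gives $p_{\mathcal{A}(S)}(y\mid\mathbf{x})=\hat p_S(y)\prod_{i=1}^m\hat p_S(x_i\mid y)$ with $\hat p_S(y)=n^S_y/N_S$ and $\hat p_S(x_i\mid y)=n^S_{x_i,y}/n^S_y$ (any normalization constant over labels is ignored in the ratios). $\mathcal{A}$ is $\delta$-training stable on $T$ (for a constant $\delta>1$) if for every $t=(\mathbf{x}^{(t)},y^{(t)})\in T$ with $p_{\mathcal{A}(T\setminus\{t\})}(y^{(t)}\mid\mathbf{x}^{(t)})>0$ and $p_{\mathcal{A}(T)}(y^{(t)}\mid\mathbf{x}^{(t)})>0$, setting $\gamma_t=\max\Big(\delta,\ \frac{p_{\mathcal{A}(T)}(y^{(t)}\mid\mathbf{x}^{(t)})}{p_{\mathcal{A}(T\setminus\{t\})}(y^{(t)}\mid\mathbf{x}^{(t)})},\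 \frac{p_{\mathcal{A}(T\setminus\{t\})}(y^{(t)}\mid\mathbf{x}^{(t)})}{p_{\mathcal{A}(T)}(y^{(t)}\mid\mathbf{x}^{(t)})}\Big)$, one has $\gamma_t^{-1}p_{\mathcal{A}(T\setminus\{t\})}(y\mid\mathbf{x})\le p_{\mathcal{A}(T)}(y\mid\mathbf{x})\le\gamma_t\,p_{\mathcal{A}(T\setminus\{t\})}(y\mid\mathbf{x})$ for all $\mathbf{x}\in X^m$, $y\in Y$. *)

(* Defs.v *)
From HB Require Import structures.
From mathcomp Require Import all_boot all_order all_algebra.
Set Implicit Arguments. Unset Strict Implicit. Unset Printing Implicit Defensive.
Import Order.TTheory GRing.Theory Num.Theory.
Local Open Scope ring_scope.

(* A training dataset is a finite multiset of records, represented as a seq;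
   T \ {t} (removal of one copy of t) is [rem t T]. *)
Definition record (X : eqType) (Y : finType) (m : nat) := (m.-tuple X * Y)%type.

Definition cnt_y (X : eqType) (Y : finType) (m : nat)
  (S : seq (record X Y m)) (y : Y) : nat :=
  count (fun r => r.2 == y) S.

Definition cnt_xy (X : eqType) (Y : finType) (m : nat)
  (S : seq (record X Y m)) (i : 'I_m) (xi : X) (y : Y) : nat :=
  count (fun r => (tnth r.1 i == xi) && (r.2 == y)) S.

(* p_{A(S)}(y | x) = (n_y / N) * prod_i (n_{x_i,y} / n_y)  (division by 0 is 0). *)
Definition nb_prob (R : realFieldType) (X : eqType) (Y : finType) (m : nat)
  (S : seq (record X Y m)) (x : m.-tuple X) (y : Y) : R :=
  ((cnt_y S y)%:R / (size S)%:R) *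
  \prod_(i < m) ((cnt_xy S i (tnth x i) y)%:R / (cnt_y S y)%:R).

Definition training_stable (R : realFieldType) (X : eqType) (Y : finType) (m : nat)
  (A : seq (record X Y m) -> m.-tuple X -> Y -> R) (delta : R)
  (T : seq (record X Y m)) : Prop :=
  1 < delta /\
  forall t : record X Y m, t \in T ->
    0 < A (rem t T) t.1 t.2 -> 0 < A T t.1 t.2 ->
    let gamma := Num.max delta
        (Num.max (A T t.1 t.2 / A (rem t T) t.1 t.2)
                 (A (rem t T) t.1 t.2 / A T t.1 t.2)) in
    forall (x : m.-tuple X) (y : Y),
      gamma^-1 * A (rem t T) x y <= A T x y /\ A T x y <= gamma * A (rem t T) x y.

(* Main.v *)
Require Import Defs.
From HB Require Import structures.
From mathcomp Require Import all_boot all_order all_algebra.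
From mathcomp Require Import ring lra.
Import Order.TTheory GRing.Theory Num.Theory.
Local Open Scope ring_scope.

Lemma cnt_y_rem (X : eqType) (Y : finType) (m : nat) (T : seq (record X Y m)) t y :
  t \in T -> cnt_y (rem t T) y = (cnt_y T y - (t.2 == y))%N.
Proof. by move=> tT; rewrite /cnt_y count_rem tT. Qed.

Lemma cnt_xy_rem (X : eqType) (Y : finType) (m : nat) (T : seq (record X Y m)) t i xi y :
  t \in T -> cnt_xy (rem t T) i xi y =
    (cnt_xy T i xi y - ((tnth t.1 i == xi) && (t.2 == y)))%N.
Proof. by move=> tT; rewrite /cnt_xy count_rem tT. Qed.

Lemma nb_ge0 (R : realFieldType) (X : eqType) (Y : finType) (m : nat)
  (S : seq (record X Y m)) x y : 0 <= nb_prob R S x y.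
Proof.
rewrite /nb_prob mulr_ge0 ?divr_ge0 ?ler0n //.
by apply: prodr_ge0 => i _; rewrite divr_ge0 ?ler0n.
Qed.

Lemma nb_neq (R : realFieldType) (X : eqType) (Y : finType) (m : nat)
  (T : seq (record X Y m)) t x y :
  t \in T -> (2 <= size T)%N -> y != t.2 ->
  nb_prob R T x y = ((size T)%:R - 1) / (size T)%:R * nb_prob R (rem t T) x y.
Proof.
move=> tT hN hy; rewrite /nb_prob size_rem // cnt_y_rem //.
have hy' : (t.2 == y) = false by rewrite eq_sym (negbTE hy).
rewrite hy' subn0.
under [in RHS]eq_bigr => i _ do rewrite cnt_xy_rem // hy' andbF subn0.
case: (size T) hN => [|[|n]] // _ /=.
rewrite mulrA; congr (_ * _).
have e : (n.+2)%:R - 1 = (n.+1)%:R :> R by rewrite -(@natr1 R n.+1) addrK.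
rewrite e; field.
have := ler0n R n => h0; apply/andP; split; apply/eqP; lra.
Qed.

Lemma nb_lower (R : realFieldType) (X : eqType) (Y : finType) (m : nat)
  (T : seq (record X Y m)) t x :
  t \in T -> (2 <= cnt_y T t.2)%N -> (0 < m)%N ->
  ((size T)%:R - 1) / (size T)%:R *
  (((cnt_y T t.2)%:R - 1) / (cnt_y T t.2)%:R) ^+ (m - 1) *
  nb_prob R (rem t T) x t.2 <= nb_prob R T x t.2.
Proof.
move=> tT ha m0.
have aN : (cnt_y T t.2 <= size T)%N := count_size _ _.
rewrite /nb_prob size_rem // cnt_y_rem // eqxx subn1.
under eq_bigr => i _ do rewrite cnt_xy_rem // eqxx andbT.
set F := fun i : 'I_m => ((cnt_xy T i (tnth x i) t.2 -
   (tnth t.1 i == tnth x i))%:R : R).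
have FL : forall i, F i <= (cnt_xy T i (tnth x i) t.2)%:R.
  by move=> i; rewrite ler_nat leq_subr.
move: (cnt_y T t.2) ha aN => [|[|a]] // _ aN.
move: (size T) aN => [|[|n]] // _; rewrite subn1 /=.
apply: (@le_trans _ _ ((a.+2)%:R / (n.+2)%:R * \prod_(i < m) (F i / (a.+2)%:R))).
  have -> : \prod_(i < m) (F i / (a.+2)%:R) =
     ((a.+1)%:R / (a.+2)%:R) ^+ m * \prod_(i < m) (F i / (a.+1)%:R).
    have -> : ((a.+1)%:R / (a.+2)%:R) ^+ m = \prod_(i < m) ((a.+1)%:R / (a.+2)%:R) :> R
      by rewrite prodr_const card_ord.
    rewrite -big_split /=.
    apply: eq_bigr => i _; field.
    have := ler0n R a => h0; apply/andP; split; apply/eqP; lra.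
  have e1 : (n.+2)%:R - 1 = (n.+1)%:R :> R by rewrite -(@natr1 R n.+1) addrK.
  have e2 : (a.+2)%:R - 1 = (a.+1)%:R :> R by rewrite -(@natr1 R a.+1) addrK.
  rewrite e1 e2.
  have ex : forall c : R, c ^+ m = c * c ^+ m.-1 by move=> c; rewrite -exprS prednK.
  rewrite ex.
  rewrite le_eqVlt; apply/orP; left; apply/eqP; rewrite /F; field.
  have := ler0n R a => h0; have := ler0n R n => h1.
  repeat (apply/andP; split); apply/eqP; lra.
rewrite ler_wpM2l // ?divr_ge0 ?ler0n //.
apply: ler_prod => i _; rewrite divr_ge0 ?ler0n //=.
by rewrite ler_pM2r ?invr_gt0 ?ltr0n.
Qed.

Lemma nb_upper (R : realFieldType) (X : eqType) (Y : finType) (m : nat)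
  (T : seq (record X Y m)) t x :
  t \in T ->
  nb_prob R T x t.2 * nb_prob R (rem t T) t.1 t.2 <=
  nb_prob R T t.1 t.2 * nb_prob R (rem t T) x t.2.
Proof.
move=> tT; rewrite /nb_prob.
rewrite [X in X <= _]mulrACA [X in _ <= X]mulrACA -!big_split /=.
rewrite ler_wpM2l // ?mulr_ge0 ?divr_ge0 ?invr_ge0 ?ler0n //.
apply: ler_prod => i _.
rewrite !cnt_xy_rem // !eqxx !andbT.
rewrite mulr_ge0 ?divr_ge0 ?ler0n //=.
rewrite [X in X <= _]mulrACA [X in _ <= X]mulrACA.
rewrite ler_wpM2r ?mulr_ge0 ?invr_ge0 ?ler0n // -!natrM ler_nat subn1.
case: eqP => [<-|_] /=; first by rewrite subn1 mulnC.
by rewrite subn0 mulnC leq_mul ?leq_pred.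
Qed.

Lemma ratio_mono (R : realFieldType) (n a : nat) :
  (1 <= n)%N -> (n <= a)%N ->
  (n%:R - 1) / n%:R <= (a%:R - 1) / a%:R :> R.
Proof.
move=> n1 na.
have a1 : (1 <= a)%N := leq_trans n1 na.
rewrite ler_pdivrMr ?ltr0n // mulrAC ler_pdivlMr ?ltr0n //.
have : n%:R <= a%:R :> R by rewrite ler_nat.
have : 1 <= n%:R :> R by rewrite (ler_nat R 1 n).
move=> h1 h2; nra.
Qed.

Theorem mainTheorem3 (R : realFieldType) (X : eqType) (Y : finType) (m : nat)
  (T : seq (record X Y m)) (ymin : Y) :
  (0 < m)%N ->
  ymin \in map snd T ->
  (forall y : Y, y \in map snd T -> (cnt_y T ymin <= cnt_y T y)%N) ->
  (2 <= cnt_y T ymin)%N ->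
  training_stable (@nb_prob R X Y m)
    (((cnt_y T ymin)%:R / ((cnt_y T ymin)%:R - 1)) ^+ (m - 1)%N *
     ((size T)%:R / ((size T)%:R - 1)))
    T.
Proof.
move=> m0 ymin_in hmin h2.
have nmN : (cnt_y T ymin <= size T)%N := count_size _ _.
have N2 : (2 <= size T)%N := leq_trans h2 nmN.
set nm := cnt_y T ymin in hmin h2 nmN *.
set N := size T in nmN N2 *.
have N2r : 2 <= N%:R :> R by rewrite (ler_nat R 2 N).
have nm2r : 2 <= nm%:R :> R by rewrite (ler_nat R 2 nm).
set s := N%:R / (N%:R - 1) : R.
set q := nm%:R / (nm%:R - 1) : R.
have s1 : 1 < s by rewrite /s ltr_pdivlMr; lra.
have q1 : 1 <= q by rewrite /q ler_pdivlMr; lra.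
set delta := q ^+ (m-1) * s.
have sd : s <= delta by rewrite /delta ler_peMl ?exprn_ege1 // (le_trans ler01 (ltW s1)).
have d1 : 1 < delta := lt_le_trans s1 sd.
split => //.
move=> t tT hp' hp gamma x y.
have gd : delta <= gamma by rewrite /gamma le_max lexx.
have gr : nb_prob R T t.1 t.2 / nb_prob R (rem t T) t.1 t.2 <= gamma.
  by rewrite /gamma !le_max lexx orbT.
have d0 : 0 < delta := lt_trans ltr01 d1.
have g0 : 0 < gamma := lt_le_trans d0 gd.
have gi : gamma^-1 <= delta^-1 by rewrite lef_pV2 ?posrE.
have ta : t.2 \in map snd T := map_f snd tT.
have ha : (nm <= cnt_y T t.2)%N := hmin _ ta.
have p'0 z : 0 <= nb_prob R (rem t T) x z := nb_ge0 R _ _ _ (rem t T) x z.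
case: (eqVneq y t.2) => [->|hy].
- split.
  + apply: le_trans (nb_lower R _ _ _ _ _ x tT (leq_trans h2 ha) m0).
    rewrite ler_wpM2r //; apply: le_trans gi _.
    rewrite /delta invfM mulrC -exprVn /s /q !invf_div.
    apply: ler_pM; rewrite ?exprn_ge0 ?divr_ge0 ?subr_ge0 ?ler0n //; try lra.
    apply: lerXn2r; rewrite ?nnegrE ?divr_ge0 ?subr_ge0 ?ler0n //; try lra.
      have : 2 <= (cnt_y T t.2)%:R :> R by rewrite (ler_nat R 2); exact: leq_trans h2 ha.
      lra.
    by apply: ratio_mono => //; exact: leq_trans h2.
  + have := nb_upper R _ _ _ _ _ x tT.
    rewrite -ler_pdivlMr // mulrAC => h; apply: le_trans h _.
    by rewrite ler_wpM2r.
- rewrite (nb_neq R _ _ _ _ _ x _ tT N2 hy); split.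
  + rewrite ler_wpM2r //; apply: le_trans gi _.
    rewrite -invf_div -/s lef_pV2 ?posrE //; lra.
  + rewrite ler_wpM2r //; apply: le_trans (_ : 1 <= gamma); last lra.
    rewrite ler_pdivrMr; lra.
Qed.
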